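(* Let $\mathbf P=(P,\leq,{}',0,1)$ be an orthogonal lub-complete poset. Then the following conditions are equivalent: (i) $\mathbf P$ is an orthocomplemented poset. (ii) For all $x,y\in P$, $x\leq y$ implies $x\rightarrow_K y=1$. (iii) For all $x,y\in P$, $x\leq y$ implies $x\rightarrow_N y=1$.
   Context: $(P,\leq,{}',0,1)$ is a bounded poset with an antitone involution ${}'$; orthogonal means $x\leq y'$ implies $x\vee y$ exists; lub-complete means for every lower bound $x$ of a finite subset $M$ there is a maximal lower bound of $M$ above $x$; orthocomplemented means $x\vee x'=1$ for all $x$. For $A\subseteq P$, $L(A)$, $U(A)$ are the lower and upper cones, $\mathrm{Max}\,A$, $\mathrm{Min}\,A$ the sets of maximal and minimal elements; joins/meets with sets are elementwise. Kalmbach implication: $x\rightarrow_K y:=\mathrm{Max}\,L(x',y)\vee \mathrm{Max}\,L(x',y')\vee (x\wedge \mathrm{Min}\,U(x',y))$; non-tolens implication: $x\rightarrow_N y:=y'\rightarrow_K x'$. ''$=1$'' means equal to $\{1\}$. *)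

(* Defs.v *)
From Stdlib Require Import List.
Set Implicit Arguments.

Section Defs.
Variables (T : Type) (le : T -> T -> Prop) (c : T -> T) (zero one : T).

Definition bounded_invol_poset : Prop :=
  (forall x, le x x) /\
  (forall x y, le x y -> le y x -> x = y) /\
  (forall x y z, le x y -> le y z -> le x z) /\
  (forall x, le zero x /\ le x one) /\
  (forall x y, le x y -> le (c y) (c x)) /\
  (forall x, c (c x) = x).

Definition is_join (x y z : T) : Prop :=
  le x z /\ le y z /\ forall w, le x w -> le y w -> le z w.
Definition is_meet (x y z : T) : Prop :=
  le z x /\ le z y /\ forall w, le w x -> le w y -> le w z.

Definition Lc (A : T -> Prop) : T -> Prop := fun z => forall a, A a -> le z a.
Definition Uc (A : T -> Prop) : T -> Prop := fun z => forall a, A a -> le a z.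
Definition Maxs (A : T -> Prop) : T -> Prop :=
  fun z => A z /\ forall w, A w -> le z w -> w = z.
Definition Mins (A : T -> Prop) : T -> Prop :=
  fun z => A z /\ forall w, A w -> le w z -> w = z.
Definition pair2 (x y : T) : T -> Prop := fun z => z = x \/ z = y.

Definition orthogonal : Prop :=
  forall x y, le x (c y) -> exists z, is_join x y z.

Definition lub_complete : Prop :=
  forall (M : list T) x, Lc (fun a => In a M) x ->
    exists m, Maxs (Lc (fun a => In a M)) m /\ le x m.

Definition orthocomplemented : Prop := forall x, is_join x (c x) one.

Definition join_set (A B : T -> Prop) : T -> Prop :=
  fun z => exists a b, A a /\ B b /\ is_join a b z.
Definition meet_set (A B : T -> Prop) : T -> Prop :=
  fun z => exists a b, A a /\ B b /\ is_meet a b z.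
Definition single (x : T) : T -> Prop := fun z => z = x.

Definition impK (x y : T) : T -> Prop :=
  join_set
    (join_set (Maxs (Lc (pair2 (c x) y))) (Maxs (Lc (pair2 (c x) (c y)))))
    (meet_set (single x) (Mins (Uc (pair2 (c x) y)))).

Definition impN (x y : T) : T -> Prop := impK (c y) (c x).

Definition is_one (A : T -> Prop) : Prop := forall z, A z <-> z = one.

End Defs.

(* Main.v *)
Require Import Defs.
From Stdlib Require Import List.

Lemma maxL_ex (T : Type) (le : T -> T -> Prop) (c : T -> T) (zero one : T) :
  bounded_invol_poset le c zero one -> lub_complete le ->
  forall p q, exists a, Maxs le (Lc le (pair2 p q)) a.
Proof.
  intros [Hrefl [Hanti [Htrans [Hbnd [Hc Hcc]]]]] HL p q.
  destruct (HL (p :: q :: nil) zero) as [m [[Hm1 Hm2] _]].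
  { intros a _. apply Hbnd. }
  exists m. split.
  - intros a [->| ->]; apply Hm1; simpl; auto.
  - intros w Hw Hmw. apply Hm2; auto.
    intros a Ha; simpl in Ha; destruct Ha as [<-|[<-|[]]]; apply Hw; unfold pair2; auto.
Qed.

Lemma keyK (T : Type) (le : T -> T -> Prop) (c : T -> T) (zero one : T) :
  bounded_invol_poset le c zero one -> orthogonal le c ->
  orthocomplemented le c one ->
  forall x y a w, Maxs le (Lc le (pair2 (c x) y)) a ->
  le a w -> le (c y) w -> le x w -> w = one.
Proof.
  intros [Hrefl [Hanti [Htrans [Hbnd [Hc Hcc]]]]] Ho Hoc x y a w [Ha1 Ha2] Haw Hyw Hxw.
  assert (Hw1 : le (c w) y) by (rewrite <- (Hcc y); apply Hc; auto).
  assert (Hw2 : le (c w) (c x)) by (apply Hc; auto).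
  assert (Hw3 : le (c w) (c a)) by (apply Hc; auto).
  destruct (Ho (c w) a) as [j [Hj1 [Hj2 Hj3]]].
  { exact Hw3. }
  assert (Hja : j = a).
  { apply Ha2; auto. intros b [->| ->].
    - apply Hj3; auto. apply Ha1; unfold pair2; auto.
    - apply Hj3; auto. apply Ha1; unfold pair2; auto. }
  subst j.
  assert (Hcaw : le (c a) w) by (rewrite <- (Hcc w); apply Hc; auto).
  destruct (Hoc a) as [_ [_ H3]].
  apply Hanti; [apply Hbnd | apply H3; auto].
Qed.

Theorem theorem4 (T : Type) (le : T -> T -> Prop) (c : T -> T) (zero one : T) :
  bounded_invol_poset le c zero one ->
  orthogonal le c ->
  lub_complete le ->
  (orthocomplemented le c one <->
     (forall x y, le x y -> is_one one (impK le c x y))) /\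
  ((forall x y, le x y -> is_one one (impK le c x y)) <->
     (forall x y, le x y -> is_one one (impN le c x y))).
Proof.
  intros HP Ho HL.
  pose proof HP as [Hrefl [Hanti [Htrans [Hbnd [Hc Hcc]]]]].
  split; [split|split].
  - intros Hoc x y Hxy z. split.
    + intros [b [m [[a [d [Ha [Hd Hb]]]] [[x0 [u [Hx0 [Hu Hm]]]] Hz]]]].
      unfold single in Hx0; subst x0.
      assert (Hdy : c y = d).
      { apply (proj2 Hd). intros e [->| ->]; auto.
        apply (proj1 Hd); unfold pair2; auto. }
      subst d.
      destruct Hb as [Hb1 [Hb2 Hb3]]. destruct Hz as [Hz1 [Hz2 Hz3]].
      destruct Hm as [Hm1 [Hm2 Hm3]]. destruct Hu as [Hu1 Hu2].
      assert (Hxm : le x m).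
      { apply Hm3; auto. apply Htrans with y; auto. apply Hu1; unfold pair2; auto. }
      apply (keyK T le c zero one HP Ho Hoc x y a z Ha); eauto.
    + intros ->.
      destruct (maxL_ex T le c zero one HP HL (c x) y) as [a Ha].
      destruct (Ho a (c y)) as [b Hb].
      { rewrite Hcc. apply (proj1 Ha); unfold pair2; auto. }
      destruct (maxL_ex T le c zero one HP HL x (c y)) as [m Hm].
      assert (Hu : Mins le (Uc le (pair2 (c x) y)) (c m)).
      { split.
        - intros e [->| ->].
          + apply Hc; apply (proj1 Hm); unfold pair2; auto.
          + rewrite <- (Hcc y) at 1. apply Hc; apply (proj1 Hm); unfold pair2; auto.
        - intros w Hw Hwm. rewrite <- (Hcc w). f_equal.
          apply (proj2 Hm).
          + intros e [->| ->].
            * rewrite <- (Hcc x). apply Hc; apply Hw; unfold pair2; auto.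
            * apply Hc; apply Hw; unfold pair2; auto.
          + rewrite <- (Hcc m). apply Hc; auto. }
      destruct Hb as [Hb1 [Hb2 Hb3]].
      destruct (Ho b x) as [j [Hj1 [Hj2 Hj3]]].
      { apply Hb3. apply (proj1 Ha); unfold pair2; auto. apply Hc; auto. }
      assert (Hj : j = one).
      { apply (keyK T le c zero one HP Ho Hoc x y a j Ha); eauto. }
      subst j.
      exists b, x. split; [|split].
      * exists a, (c y). split; [exact Ha|split].
        -- split.
           ++ intros e [->| ->]; auto.
           ++ intros w Hw Hyw. apply Hanti; auto. apply Hw; unfold pair2; auto.
        -- split; auto.
      * exists x, (c m). split; [reflexivity|split; [exact Hu|]].
        split; [auto|split; auto].
        apply Htrans with y; auto. apply (proj1 Hu); unfold pair2; auto.
      * split; auto.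
  - intros H x.
    assert (Hx0 : le zero x) by apply Hbnd.
    destruct (proj2 (H zero x Hx0 one) eq_refl)
      as [b [m [[a [d [Ha [Hd Hb]]]] [[x0 [u [Hx0' [Hu Hm]]]] Hz]]]].
    unfold single in Hx0'; subst x0.
    assert (Hxc0 : le x (c zero)).
    { rewrite <- (Hcc x). apply Hc. apply Hbnd. }
    assert (Hax : x = a).
    { apply (proj2 Ha). intros e [->| ->]; auto. apply (proj1 Ha); unfold pair2; auto. }
    subst a.
    assert (Hdx : c x = d).
    { apply (proj2 Hd). intros e [->| ->]; auto. apply (proj1 Hd); unfold pair2; auto. }
    subst d.
    destruct Hb as [Hb1 [Hb2 Hb3]]. destruct Hz as [Hz1 [Hz2 Hz3]].
    destruct Hm as [Hm1 [Hm2 Hm3]].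
    split; [eauto|split; [eauto|]].
    intros w Hw1 Hw2. apply Hz3; auto. apply Htrans with zero; auto. apply Hbnd.
  - intros H x y Hxy. unfold impN. apply H. apply Hc; auto.
  - intros H x y Hxy. pose proof (H (c y) (c x) (Hc _ _ Hxy)) as H'.
    unfold impN in H'. rewrite !Hcc in H'. exact H'.
Qed.
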